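(* Let $(F_n)_{n\ge0}$ be the Fibonacci sequence ($F_0=0$, $F_1=1$, $F_{n+2}=F_{n+1}+F_n$) and $\Phi=(1+\sqrt5)/2$. For every fixed positive integer $m$, \[\log\mathrm{lcm}(F_n,F_{n+1},\dots,F_{n+m})\sim n(m+1)\log\Phi\quad\text{as } n\to+\infty.\] *)

(* Defs.v *)
From HB Require Import structures.
From mathcomp Require Import all_boot all_order all_algebra.
From mathcomp Require Import all_classical all_reals all_analysis.
Set Implicit Arguments. Unset Strict Implicit. Unset Printing Implicit Defensive.

Fixpoint fib (n : nat) : nat :=
  match n with
  | 0 => 0
  | 1 => 1
  | (k.+1 as k1).+1 => fib k1 + fib k
  end.

Definition lcm_fib (n m : nat) : nat :=
  \big[lcmn/1%N]_(n <= i < n + m.+1) fib i.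

Definition golden (R : realType) : R := (1 + Num.sqrt 5) / 2.

(* Main.v *)
Require Import Defs.
From HB Require Import structures.
From mathcomp Require Import all_boot all_order all_algebra.
From mathcomp Require Import all_classical all_reals all_analysis.
From mathcomp Require Import ring lra zify.
Import Order.TTheory GRing.Theory Num.Theory.
Local Open Scope classical_set_scope.

Lemma fibSS k : fib k.+2 = (fib k.+1 + fib k)%N.
Proof. by []. Qed.

Lemma fib_add a b : fib (a + b).+1 = (fib a.+1 * fib b.+1 + fib a * fib b)%N.
Proof.
elim: a b => [|a IH] b; first by rewrite add0n mul1n mul0n addn0.
rewrite addSnnS IH !fibSS; ring.
Qed.

Lemma fib_coprime p : coprime (fib p) (fib p.+1).
Proof.
elim: p => [|p IH] //; rewrite /coprime fibSS gcdnDl gcdnC.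
exact: IH.
Qed.

Lemma fib_gt0 p : (0 < p)%N -> (0 < fib p)%N.
Proof.
case: p => // p _; elim: p => // p IH.
by rewrite fibSS addn_gt0 IH.
Qed.

Lemma fib_mono : {homo fib : a b / (a <= b)%N}.
Proof.
apply: (homo_leq (r := fun x y => is_true (x <= y)%N)) => //.
  by move=> ? ? ?; apply: leq_trans.
case => // k; rewrite fibSS leq_addr //.
Qed.

Lemma fib_gcd p d : (gcdn (fib p) (fib (p + d).+1) %| fib d.+1)%N.
Proof.
set g := gcdn _ _.
have g1 : (g %| fib p)%N by apply: dvdn_gcdl.
have g2 : (g %| fib (p + d).+1)%N by apply: dvdn_gcdr.
rewrite addnC fib_add in g2.
have g3 : (g %| fib d * fib p)%N by apply: dvdn_mull.
rewrite (dvdn_addl _ g3) in g2.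
have cop : coprime g (fib p.+1).
  exact: coprime_dvdl g1 (fib_coprime p).
by move: g2; rewrite mulnC (Gauss_dvdr _ cop).
Qed.

Lemma gcd_lcm_big (r : seq nat) (f : nat -> nat) a :
  (gcdn (\big[lcmn/1%N]_(i <- r) f i) a %| \prod_(i <- r) gcdn (f i) a)%N.
Proof.
apply: (big_ind2 (fun x y => gcdn x a %| y)%N).
- by rewrite gcd1n.
- move=> x1 x2 y1 y2 h1 h2.
  rewrite (Order.NatDvd.meetUl x1 y1 a).
  apply: dvdn_trans (dvdn_mul h1 h2).
  by rewrite dvdn_lcm dvdn_mulr ?dvdn_mull.
- by [].
Qed.

Lemma lcm_dvd_prod (r : seq nat) (f : nat -> nat) :
  (\big[lcmn/1%N]_(i <- r) f i %| \prod_(i <- r) f i)%N.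
Proof.
apply: (big_ind2 (fun x y => x %| y)%N) => //.
move=> x1 x2 y1 y2 h1 h2.
by rewrite dvdn_lcm (dvdn_mulr _ h1) (dvdn_mull _ h2).
Qed.

Definition Dk (k : nat) : nat := \prod_(j < k) (fib j ^ j)%N.

Lemma main_nat n k : (0 < n)%N ->
  (\prod_(n <= i < n + k) fib i <= (\big[lcmn/1%N]_(n <= i < n + k) fib i) * Dk k)%N.
Proof.
move=> n0; elim: k => [|k IH].
  by rewrite addn0 !big_geq // /Dk big_ord0.
rewrite addnS !big_nat_recr ?leq_addr //= /Dk big_ord_recr /= -/(Dk k).
set L := \big[lcmn/1%N]_(n <= i < n + k) fib i.
set a := fib (n + k).
have Lpos : (0 < L)%N.
  rewrite /L big_nat_cond.
  apply: (big_ind (fun x => 0 < x)%N) => // [x y hx hy|i /andP [/andP [hi _] _]].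
  by rewrite lcmn_gt0 hx hy.
  by apply: fib_gt0; apply: leq_trans hi.
have apos : (0 < a)%N by apply: fib_gt0; apply: leq_trans (leq_addr _ _).
have hg : (gcdn L a <= fib k ^ k)%N.
  have hd := gcd_lcm_big (index_iota n (n + k)) fib a.
  apply: leq_trans (dvdn_leq _ hd) _.
    by rewrite prodn_gt0 // => i; rewrite gcdn_gt0 apos orbT.
  rewrite big_nat_cond.
  apply: leq_trans (leq_prod (E2 := fun i => fib k) _) _.
    move=> i /andP [/andP [h1 h2] _].
    have -> : (a = fib (i + (n + k - i).-1).+1)%N.
      rewrite -addnS prednK ?subn_gt0 // subnKC //.
      by apply: ltnW.
    apply: leq_trans (dvdn_leq _ (fib_gcd _ _)) _.
      by apply: fib_gt0.
    apply: fib_mono. rewrite prednK ?subn_gt0 //.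
    rewrite leq_subLR; lia.
  by rewrite -big_nat_cond prod_nat_const_nat addKn.
apply: leq_trans (leq_mul IH (leqnn a)) _.
rewrite -/L.
rewrite mulnAC -(muln_lcm_gcd L a) [(Dk k * _)%N]mulnC mulnA leq_mul2r leq_mul2l hg !orbT //.
Qed.
Local Open Scope ring_scope.

Lemma golden_sq (R : realType) : golden R ^+ 2 = golden R + 1 /\ 1 < golden R /\ golden R <= 2.
Proof.
rewrite /golden.
have h5 : 0 <= 5 :> R by [].
have hs := sqr_sqrtr h5.
have hs0 : 0 <= Num.sqrt 5 :> R by apply: sqrtr_ge0.
set s := Num.sqrt 5 in hs hs0 *.
rewrite expr2 in hs *; split; first nra.
split; nra.
Qed.

Lemma fib_bounds (R : realType) k :
  let p := golden R in
  [/\ p ^+ k <= (fib k.+2)%:R, p ^+ k.+1 <= (fib k.+3)%:R,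
      (fib k.+1)%:R <= p ^+ k & (fib k.+2)%:R <= p ^+ k.+1].
Proof.
move=> p; have [h2 [h1 hle]] := golden_sq R; rewrite -/p in h2 h1 hle.
elim: k => [|k [a b c d]].
  by rewrite !expr0 expr1 /=; split => //; rewrite ?ler_nat // ltW.
have e : forall j, p ^+ j.+2 = p ^+ j.+1 + p ^+ j.
  by move=> j; rewrite -addn2 exprD h2 mulrDr mulr1 -exprSr.
split => //.
- by rewrite e (fibSS k.+2) natrD lerD.
- by rewrite e (fibSS k.+1) natrD lerD.
Qed.


Lemma key_bounds (R : realType) m n : (2 <= n)%N ->
  ln (golden R) *+ (n - 2) *+ m.+1 - ln ((Dk m.+1)%:R : R) <= ln ((lcm_fib n m)%:R : R)
  <= ln (golden R) *+ (n + m) *+ m.+1.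
Proof.
move=> n2; have [h2 [h1 hle]] := golden_sq R.
set p := golden R in h2 h1 hle *.
set c := ln p.
have p0 : 0 < p by apply: lt_trans h1.
set P := (\prod_(n <= i < n + m.+1) fib i)%N.
set N := lcm_fib n m.
set D := Dk m.+1.
have hP : (P <= N * D)%N by apply: main_nat; lia.
have hdiv : (N %| P)%N by apply: lcm_dvd_prod.
have Ppos : (0 < P)%N.
  rewrite /P big_nat_cond.
  apply: (big_ind (fun x => 0 < x)%N) => // [x y hx hy|i /andP [/andP [hi _] _]].
    by rewrite muln_gt0 hx hy.
  by apply: fib_gt0; apply: leq_trans hi; lia.
have Npos : (0 < N)%N by move: hP; case: (N) Ppos => //= Pp; rewrite mul0n; lia.
have Dpos : (0 < D)%N by move: hP; case: (D) Ppos => //= Pp; rewrite muln0; lia.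
have hNP : (N <= P)%N by apply: dvdn_leq.
have low : (p ^+ (n - 2)) ^+ m.+1 <= P%:R.
  rewrite /P natr_prod -[n in _ ^+ n](addKn n m.+1) -prodr_const_nat.
  rewrite big_nat_cond [X in _ <= X]big_nat_cond.
  apply: ler_prod => i /andP [/andP [hi1 hi2] _].
  rewrite exprn_ge0 ?(ltW p0) //=.
  have [j ej] : exists j, i = j.+2 by exists (i - 2)%N; lia.
  subst i; have [a _ _ _] := fib_bounds R j.
  apply: le_trans a; apply: ler_weXn2l; [exact: ltW | lia].
have upp : P%:R <= (p ^+ (n + m)) ^+ m.+1 :> R.
  rewrite /P natr_prod -[n in _ ^+ n](addKn n m.+1) -prodr_const_nat.
  rewrite big_nat_cond [X in _ <= X]big_nat_cond.
  apply: ler_prod => i /andP [/andP [hi1 hi2] _].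
  rewrite ler0n /=.
  have [j ej] : exists j, i = j.+2 by exists (i - 2)%N; lia.
  subst i; have [_ _ _ d] := fib_bounds R j.
  apply: le_trans d _; apply: ler_weXn2l; [exact: ltW | lia].
have posr : forall k : nat, (0 < k)%N -> (k%:R : R) \is Num.pos.
  by move=> k hk; rewrite posrE ltr0n.
have lnP1 : ln (P%:R : R) <= c *+ (n + m) *+ m.+1.
  rewrite /c -!lnXn ?exprn_gt0 // ler_ln ?posr //.
  by rewrite posrE !exprn_gt0.
have lnP2 : c *+ (n - 2) *+ m.+1 <= ln (P%:R : R).
  rewrite /c -!lnXn ?exprn_gt0 // ler_ln ?posr //.
  by rewrite posrE !exprn_gt0.
have lnNP : ln (N%:R : R) <= ln (P%:R : R) by rewrite ler_ln ?posr // ler_nat.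
have lnPND : ln (P%:R : R) <= ln (N%:R : R) + ln (D%:R : R).
  by rewrite -lnM ?posr // -natrM ler_ln ?posr ?muln_gt0 ?Npos // ler_nat.
apply/andP; split; [lra | lra].
Qed.

Lemma fin_ineq (R : realType) (y b l d ad a ey : R) :
  y - 2 * b - d <= l -> l <= y + a -> a + 2 * b + ad < ey -> d <= ad ->
  0 <= a -> 0 <= b -> 0 <= ad -> - ey <= l - y <= ey.
Proof. move=> H1 H2 H3 H4 H5 H6 H7; apply/andP; split; lra. Qed.

Theorem corollary3 (R : realType) (m : nat) (hm : (0 < m)%N) :
  (fun n : nat => ln ((lcm_fib n m)%:R : R))
    ~_\oo (fun n : nat => n%:R * (m.+1)%:R * ln (golden R)).
Proof.
apply/eqaddoP => eps heps.
have [h2 [h1 hle]] := golden_sq R.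
have c0 : 0 < ln (golden R) by apply: ln_gt0.
set c := ln (golden R) in c0 *.
set D := ln ((Dk m.+1)%:R : R).
set M := (m.+1)%:R : R.
have M0 : 0 < M by rewrite ltr0n.
set K := c * M * (m%:R + 2) + `|D|.
have eMc : 0 < eps * (M * c) by rewrite !mulr_gt0.
set N0 := Num.Def.archi_bound (K / (eps * (M * c))).
have hN0 : K / (eps * (M * c)) < N0%:R.
  apply: archi_boundP; rewrite divr_ge0 ?(ltW eMc) // addr_ge0 //.
  by rewrite !mulr_ge0 ?(ltW c0) ?(ltW M0) // addr_ge0.
exists (maxn 2 N0) => // n /= hn.
rewrite geq_max in hn; case/andP: hn => hn2 hnN.
have [kl ku] := andP (@key_bounds R m n hn2).
have e1 : c *+ (n - 2) *+ m.+1 = c * (n%:R - 2) * M.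
  by rewrite -mulrnA -[c *+ _]mulr_natr natrM natrB // mulrA.
have e2 : c *+ (n + m) *+ m.+1 = c * (n%:R + m%:R) * M.
  by rewrite -mulrnA -[c *+ _]mulr_natr natrM natrD mulrA.
rewrite -/c -/D e1 in kl; rewrite -/c e2 in ku.
have xN : (N0%:R : R) <= n%:R by rewrite ler_nat.
have hK : K < eps * (M * c) * n%:R.
  by rewrite mulrC -ltr_pdivrMr //; apply: lt_le_trans xN.
have hD : D <= `|D| by apply: ler_norm.
have b0 : 0 <= n%:R * M * c by rewrite !mulr_ge0 ?(ltW c0) ?(ltW M0).
rewrite [X in `|X|]/= (ger0_norm b0) ler_norml.
set x := (n%:R : R) in kl ku hK b0 xN *.
set L := ln _ in kl ku *.
have -> : ((fun n0 : nat => ln (R:=R) (lcm_fib n0 m)%:R) -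
   (fun n0 : nat => n0%:R * M * c)) n = L - x * M * c by [].
have f1 : c * (x - 2) * M = x * M * c - 2 * (c * M) by ring.
have f2 : c * (x + m%:R) * M = x * M * c + c * M * m%:R by ring.
have f3 : eps * (M * c) * x = eps * (x * M * c) by ring.
have g1 : 0 <= c * M * m%:R by rewrite !mulr_ge0 ?(ltW c0) ?(ltW M0).
have g2 : 0 <= c * M by rewrite !mulr_ge0 ?(ltW c0) ?(ltW M0).
rewrite f1 in kl; rewrite f2 in ku; rewrite f3 /K in hK.
have f4 : c * M * (m%:R + 2) = c * M * m%:R + 2 * (c * M) by ring.
rewrite f4 in hK.
have g3 : 0 <= `|D| by [].
move: kl ku hK hD g1 g2 g3.
generalize (eps * (x * M * c)) => ey.
generalize (c * M * m%:R) => a.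
generalize (x * M * c) (c * M) L D `|D|.
move=> y b l d ad H1 H2 H3 H4 H5 H6 H7.
exact: fin_ineq H1 H2 H3 H4 H5 H6 H7.
Qed.
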